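(* Let $m\ge n\ge 1$ be integers and let $$T_{m,n}(z)=\frac{(m-n) z^2 +2 (m+n) z +m-n}{(m+n) z^2 +2(m-n)z +m+n},$$ regarded as a rational map of the Riemann sphere. Let $J_{m,n}$ denote the Julia set of $T_{m,n}$. Then: (1) If $m=n$, then $J_{m,m}$ is the imaginary axis. (2) If $m>n\ge 1$, then $J_{m,n}$ is the circle $$J_{m,n}=\left\{z\in\mathbb{C}: \left|z+\frac{m^2+n^2}{m^2-n^2}\right|=\frac{2mn}{m^2-n^2}\right\}.$$
   Context: The map $T_{m,n}$ is the rational function obtained by applying Schröder's root-finding method $S_f(z)=z-\dfrac{f(z)f'(z)}{f'(z)^2-f(z)f''(z)}$ to the polynomial $f(z)=(z-1)^m(z+1)^n$ (equivalently, the affine conjugate of Schröder's method for $(z-a)^m(z-b)^n$ moving $a$ to $1$ and $b$ to $-1$). The Julia set of a rational map is the standard one from complex dynamics (the complement of the set of points where the family of iterates is normal). *)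

(* Defs.v *)
From Stdlib Require Import Reals.
From Coquelicot Require Import Coquelicot.
Open Scope R_scope.

(* The Riemann sphere: [Some z] is the finite point z, [None] is infinity. *)
Definition sphere : Type := option C.

Definition chordal (x y : sphere) : R :=
  match x, y with
  | Some z, Some w =>
      2 * Cmod (Cminus z w) / sqrt ((1 + Cmod z ^ 2) * (1 + Cmod w ^ 2))
  | Some z, None | None, Some z => 2 / sqrt (1 + Cmod z ^ 2)
  | None, None => 0
  end.

Definition sphere_open (U : sphere -> Prop) : Prop :=
  forall x, U x -> exists r, 0 < r /\ forall y, chordal x y < r -> U y.

Definition loc_unif_cvg (U : sphere -> Prop) (g : nat -> sphere -> sphere)
  (h : sphere -> sphere) : Prop :=
  forall x, U x -> exists r, 0 < r /\
    forall eps, 0 < eps -> exists N : nat, forall j, (N <= j)%nat ->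
      forall y, U y -> chordal x y < r -> chordal (g j y) (h y) < eps.

Definition normal_iterates (f : sphere -> sphere) (U : sphere -> Prop) : Prop :=
  forall s : nat -> nat, exists (phi : nat -> nat) (h : sphere -> sphere),
    (forall j, (phi j < phi (S j))%nat) /\
    loc_unif_cvg U (fun j => Nat.iter (s (phi j)) f) h.

Definition fatou (f : sphere -> sphere) (x : sphere) : Prop :=
  exists U, sphere_open U /\ U x /\ normal_iterates f U.

Definition julia (f : sphere -> sphere) (x : sphere) : Prop := ~ fatou f x.

(* T_{m,n}(z) = ((m-n) z^2 + 2(m+n) z + (m-n)) / ((m+n) z^2 + 2(m-n) z + (m+n))
   as a map of the sphere: poles go to infinity, infinity goes to (m-n)/(m+n).
   (Numerator and denominator have no common root when m,n >= 1.) *)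
Definition T_mn (m n : nat) (x : sphere) : sphere :=
  let a : C := RtoC (INR m - INR n) in
  let b : C := RtoC (INR m + INR n) in
  match x with
  | None => Some (Cdiv a b)
  | Some z =>
      let P := Cplus (Cplus (Cmult a (Cmult z z)) (Cmult (RtoC 2) (Cmult b z))) a in
      let Q := Cplus (Cplus (Cmult b (Cmult z z)) (Cmult (RtoC 2) (Cmult a z))) b in
      if Req_EM_T (Cmod Q) 0 then None else Some (Cdiv P Q)
  end.

(* Main.v *)
Require Import Defs.
From Stdlib Require Import Reals Lra Lia Psatz IndefiniteDescription.
From Coquelicot Require Import Coquelicot.
Open Scope R_scope.

Definition pz (z : C) : R :=
  ((fst z - 1)^2 + snd z ^2) / (2 * (1 + fst z ^2 + snd z ^2)).
Definition pp (x : sphere) : R :=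
  match x with None => 1/2 | Some z => pz z end.

Lemma abs_le_of_sq (u v : R) : 0 <= v -> u^2 <= v^2 -> Rabs u <= v.
Proof.
  intros Hv H. unfold Rabs; destruct (Rcase_abs u); nra.
Qed.

Lemma sq_sqrt_pos x : 0 <= x -> sqrt x ^ 2 = x.
Proof. intros; rewrite <- Rsqr_pow2; apply Rsqr_sqrt; auto. Qed.

Lemma pp_lip x y : Rabs (pp x - pp y) <= chordal x y.
Proof.
  destruct x as [[a b]|]; destruct y as [[c d]|];
  unfold pp, pz, chordal, Cmod, Cminus, Cplus, Copp; simpl fst; simpl snd.
  - set (D1 := 1 + a^2 + b^2). set (D2 := 1 + c^2 + d^2).
    assert (H1 : 1 <= D1) by (unfold D1; nra).
    assert (H2 : 1 <= D2) by (unfold D2; nra).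
    rewrite (sq_sqrt_pos (a^2+b^2)) by nra.
    rewrite (sq_sqrt_pos (c^2+d^2)) by nra.
    replace (1 + (a^2+b^2)) with D1 by (unfold D1; ring).
    replace (1 + (c^2+d^2)) with D2 by (unfold D2; ring).
    set (E := (a + - c)^2 + (b + - d)^2).
    assert (HE : 0 <= E) by (unfold E; apply Rplus_le_le_0_compat; apply pow2_ge_0).
    assert (HF : 0 < D1 * D2) by nra.
    assert (sE2 := sq_sqrt_pos E HE).
    assert (sF2 := sq_sqrt_pos (D1*D2) (Rlt_le _ _ HF)).
    assert (sFp := sqrt_lt_R0 _ HF).
    assert (sEp := sqrt_pos E).
    apply abs_le_of_sq.
    { apply Rmult_le_pos; [nra| left; apply Rinv_0_lt_compat; lra]. }
    replace ((2 * sqrt E / sqrt (D1 * D2))^2) with (4 * E / (D1*D2)).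
    2:{ set (sE := sqrt E) in *. set (sF := sqrt (D1*D2)) in *.
        rewrite <- sE2, <- sF2. field. lra. }
    replace (((a - 1) ^ 2 + b ^ 2) / (2 * D1) - ((c - 1) ^ 2 + d ^ 2) / (2 * D2))
      with ((c * D1 - a * D2) / (D1 * D2)).
    2:{ unfold D1, D2. field. unfold D1, D2 in H1, H2. lra. }
    assert (Hid : 4 * (E * D1 * D2) = 4 * ((a*D2 - c*D1)^2 + (b*D2 - d*D1)^2)
       + ((a^2+b^2-1)*D2 - (c^2+d^2-1)*D1)^2).
    { unfold E, D1, D2. ring. }
    replace (((c * D1 - a * D2) / (D1 * D2))^2) with ((c * D1 - a * D2)^2 / (D1 * D2)^2) by (field; lra).
    replace (4 * E / (D1 * D2)) with (4 * (E * D1 * D2) / (D1 * D2)^2) by (field; lra).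
    unfold Rdiv. apply Rmult_le_compat_r.
    { left; apply Rinv_0_lt_compat. nra. }
    rewrite Hid.
    assert (h0: (c*D1 - a*D2)^2 = (a*D2-c*D1)^2) by ring. rewrite h0.
    pose proof (pow2_ge_0 (a*D2 - c*D1)). pose proof (pow2_ge_0 (b*D2-d*D1)).
    pose proof (pow2_ge_0 ((a^2+b^2-1)*D2 - (c^2+d^2-1)*D1)). lra.
  - set (D1 := 1 + a^2 + b^2).
    assert (H1 : 1 <= D1) by (unfold D1; nra).
    rewrite (sq_sqrt_pos (a^2+b^2)) by nra.
    replace (1 + (a^2+b^2)) with D1 by (unfold D1; ring).
    assert (sF2 := sq_sqrt_pos D1 ltac:(lra)).
    assert (sFp := sqrt_lt_R0 D1 ltac:(lra)).
    apply abs_le_of_sq.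
    { apply Rmult_le_pos; [lra| left; apply Rinv_0_lt_compat; lra]. }
    replace ((2 / sqrt D1)^2) with (4 / D1) by (set (sF := sqrt D1) in *; rewrite <- sF2; field; lra).
    replace (((a - 1) ^ 2 + b ^ 2) / (2 * D1) - 1/2) with (- a / D1) by (unfold D1; field; unfold D1 in H1; lra).
    replace ((- a / D1)^2) with (a^2/D1^2) by (field; lra).
    replace (4 / D1) with (4 * D1 / D1^2) by (field; lra).
    unfold Rdiv. apply Rmult_le_compat_r. { left; apply Rinv_0_lt_compat. nra. }
    unfold D1. nra.
  - set (D1 := 1 + c^2 + d^2).
    assert (H1 : 1 <= D1) by (unfold D1; nra).
    rewrite (sq_sqrt_pos (c^2+d^2)) by nra.
    replace (1 + (c^2+d^2)) with D1 by (unfold D1; ring).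
    assert (sF2 := sq_sqrt_pos D1 ltac:(lra)).
    assert (sFp := sqrt_lt_R0 D1 ltac:(lra)).
    apply abs_le_of_sq.
    { apply Rmult_le_pos; [lra| left; apply Rinv_0_lt_compat; lra]. }
    replace ((2 / sqrt D1)^2) with (4 / D1) by (set (sF := sqrt D1) in *; rewrite <- sF2; field; lra).
    replace (1/2 - ((c - 1) ^ 2 + d ^ 2) / (2 * D1)) with (c / D1) by (unfold D1; field; unfold D1 in H1; lra).
    replace ((c / D1)^2) with (c^2/D1^2) by (field; lra).
    replace (4 / D1) with (4 * D1 / D1^2) by (field; lra).
    unfold Rdiv. apply Rmult_le_compat_r. { left; apply Rinv_0_lt_compat. nra. }
    unfold D1. nra.
  - rewrite Rminus_eq_0, Rabs_R0. lra.
Qed.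


Definition G (M N p : R) : R := N^2 * p^2 / (N^2 * p^2 + M^2 * (1-p)^2).

Lemma pz_div (P Q : C) : fst Q^2 + snd Q^2 <> 0 ->
  pz (Cdiv P Q) = ((fst P - fst Q)^2 + (snd P - snd Q)^2) /
     (2*((fst P^2+snd P^2) + (fst Q^2 + snd Q^2))).
Proof.
  destruct P as [p1 p2]; destruct Q as [q1 q2]; simpl fst; simpl snd; intro H.
  unfold pz, Cdiv, Cinv, Cmult; simpl fst; simpl snd.
  assert (0 < q1^2+q2^2) by (pose proof (pow2_ge_0 q1); pose proof (pow2_ge_0 q2); lra).
  field. pose proof (pow2_ge_0 p1); pose proof (pow2_ge_0 p2).
  pose proof (pow2_ge_0 (p1 * q1 - p2 * - q2)); pose proof (pow2_ge_0 (p1 * - q2 + p2 * q1)).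
  assert (q1*q1+q2*q2 = q1^2+q2^2) by ring.
  assert (0 < (q1 * q1 + q2 * q2)^2) by (rewrite H5; nra).
  repeat split; lra.
Qed.

Lemma G_pz (M N a b : R) : 0 < M -> 0 < N ->
  G M N (pz (a,b)) = N^2 * ((a-1)^2+b^2)^2 / (N^2*((a-1)^2+b^2)^2 + M^2*((a+1)^2+b^2)^2).
Proof.
  intros HM HN. unfold G, pz; simpl fst; simpl snd.
  set (A := (a-1)^2+b^2). set (B := (a+1)^2+b^2).
  assert (HA : 0 <= A) by (unfold A; apply Rplus_le_le_0_compat; apply pow2_ge_0). assert (HB : 0 <= B) by (unfold B; apply Rplus_le_le_0_compat; apply pow2_ge_0).
  assert (HAB : A + B = 2 * (1 + a^2 + b^2)) by (unfold A, B; ring).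
  assert (HAB' : 0 < A + B) by nra.
  rewrite <- HAB.
  assert (HD : 0 < N^2*A^2 + M^2*B^2).
  { assert (0 <= N^2*A^2) by (apply Rmult_le_pos; apply pow2_ge_0).
    assert (0 <= M^2*B^2) by (apply Rmult_le_pos; apply pow2_ge_0).
    destruct HA as [HA|HA].
    - assert (0 < N^2*A^2) by (apply Rmult_lt_0_compat; apply pow_lt; lra). lra.
    - assert (0 < B) by lra.
      assert (0 < M^2*B^2) by (apply Rmult_lt_0_compat; apply pow_lt; lra). lra. }
  assert (E1 : 1 - A/(A+B) = B/(A+B)) by (field; lra).
  rewrite E1.
  assert (E2 : N ^ 2 * (A / (A + B)) ^ 2 + M ^ 2 * (B / (A + B)) ^ 2 = (N^2*A^2 + M^2*B^2)/(A+B)^2) by (field; lra).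
  rewrite E2. field. split; lra.
Qed.

Lemma pp_T m n x : (1<=n)%nat -> (1<=m)%nat ->
  pp (T_mn m n x) = G (INR m) (INR n) (pp x).
Proof.
  intros Hn Hm.
  assert (HM : 0 < INR m) by (apply lt_0_INR; lia).
  assert (HN : 0 < INR n) by (apply lt_0_INR; lia).
  set (M := INR m) in *. set (N := INR n) in *.
  destruct x as [[a b]|].
  - unfold T_mn; cbv zeta. fold M N.
    match goal with |- context[Req_EM_T (Cmod ?Q) 0] => set (QQ := Q) end.
    match goal with |- context[Cdiv ?P QQ] => set (PP := P) end.
    set (X1 := (a+1)^2 - b^2). set (X2 := (a-1)^2-b^2).
    set (Y1 := 2*b*(a+1)). set (Y2 := 2*b*(a-1)).
    assert (Q1 : fst QQ = M * X1 + N * X2) by (unfold QQ, X1, X2; simpl; ring).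
    assert (Q2 : snd QQ = M * Y1 + N * Y2) by (unfold QQ, Y1, Y2; simpl; ring).
    assert (P1 : fst PP = M * X1 - N * X2) by (unfold PP, X1, X2; simpl; ring).
    assert (P2 : snd PP = M * Y1 - N * Y2) by (unfold PP, Y1, Y2; simpl; ring).
    assert (EA : X2^2 + Y2^2 = ((a-1)^2+b^2)^2) by (unfold X2, Y2; ring).
    assert (EB : X1^2 + Y1^2 = ((a+1)^2+b^2)^2) by (unfold X1, Y1; ring).
    change (pp (Some (a,b))) with (pz (a,b)). rewrite G_pz by lra.
    set (A := (a-1)^2+b^2) in *. set (B := (a+1)^2+b^2) in *.
    assert (HA : 0 <= A) by (unfold A; apply Rplus_le_le_0_compat; apply pow2_ge_0).
    assert (HB : 0 <= B) by (unfold B; apply Rplus_le_le_0_compat; apply pow2_ge_0).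
    assert (HAB : 0 < A + B) by (unfold A, B; nra).
    assert (HD : 0 < N^2*A^2 + M^2*B^2).
    { assert (0 <= N^2*A^2) by (apply Rmult_le_pos; apply pow2_ge_0).
      assert (0 <= M^2*B^2) by (apply Rmult_le_pos; apply pow2_ge_0).
      destruct HA as [HA|HA].
      - assert (0 < N^2*A^2) by (apply Rmult_lt_0_compat; apply pow_lt; lra). lra.
      - assert (0 < B) by lra.
        assert (0 < M^2*B^2) by (apply Rmult_lt_0_compat; apply pow_lt; lra). lra. }
    destruct Req_EM_T as [e|e].
    + simpl pp. unfold Cmod in e. apply sqrt_eq_0 in e.
      2:{ apply Rplus_le_le_0_compat; apply pow2_ge_0. }
      rewrite Q1, Q2 in e.
      assert (e1 : M * X1 + N * X2 = 0) by (pose proof (pow2_ge_0 (M * X1 + N * X2)); pose proof (pow2_ge_0 (M * Y1 + N * Y2)); nra).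
      assert (e2 : M * Y1 + N * Y2 = 0) by (pose proof (pow2_ge_0 (M * X1 + N * X2)); pose proof (pow2_ge_0 (M * Y1 + N * Y2)); nra).
      assert (E : N^2 * A^2 = M^2 * B^2).
      { rewrite <- EA, <- EB.
        replace (M^2 * (X1^2+Y1^2)) with ((M*X1)^2 + (M*Y1)^2) by ring.
        replace (M*X1) with (-(N*X2)) by lra.
        replace (M*Y1) with (-(N*Y2)) by lra. ring. }
      rewrite E. rewrite E in HD. field. lra.
    + simpl pp. rewrite pz_div.
      2:{ intro h. apply e. unfold Cmod. rewrite h. apply sqrt_0. }
      rewrite P1, P2, Q1, Q2.
      replace ((M * X1 - N * X2 - (M * X1 + N * X2)) ^ 2 + (M * Y1 - N * Y2 - (M * Y1 + N * Y2)) ^ 2)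
        with (4 * N^2 * (X2^2+Y2^2)) by ring.
      replace ((M * X1 - N * X2) ^ 2 + (M * Y1 - N * Y2) ^ 2 + ((M * X1 + N * X2) ^ 2 + (M * Y1 + N * Y2) ^ 2))
        with (2 * (N^2 * (X2^2+Y2^2) + M^2 * (X1^2+Y1^2))) by ring.
      rewrite EA, EB. field. lra.
  - unfold T_mn; cbv zeta. fold M N. simpl pp.
    rewrite pz_div. 2:{ simpl. nra. }
    unfold G. simpl. field. split; nra.
Qed.


Definition sig_ (M N p : R) := N^2 * p / (M^2 * (1 - p)).
Definition tau_ (M N p : R) := M^2 * (1 - p) / (N^2 * p).

Lemma pow_le_1 q k : 0 <= q <= 1 -> q ^ k <= 1.
Proof.
  intros H. induction k. simpl; lra. simpl.
  assert (0 <= q^k) by (apply pow_le; lra). nra.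
Qed.

Section S.
Variables M N : R.
Hypothesis HN : 0 < N.
Hypothesis HNM : N <= M.

Lemma G_range p : 0 <= p <= 1 -> 0 <= G M N p <= 1.
Proof.
  intros Hp. unfold G.
  assert (0 < M) by lra.
  assert (0 <= N^2*p^2) by (apply Rmult_le_pos; apply pow2_ge_0).
  assert (0 <= M^2*(1-p)^2) by (apply Rmult_le_pos; apply pow2_ge_0).
  destruct (Req_dec p 1) as [e|e].
  - subst. assert (0 < N^2 * 1^2) by (apply Rmult_lt_0_compat; apply pow_lt; lra).
    split. apply Rmult_le_pos; [lra|left; apply Rinv_0_lt_compat; lra].
    apply Rmult_le_reg_r with (N ^ 2 * 1 ^ 2 + M ^ 2 * (1 - 1) ^ 2). lra.
    unfold Rdiv; rewrite Rmult_assoc, Rinv_l by lra. lra.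
  - assert (0 < M^2*(1-p)^2) by (apply Rmult_lt_0_compat; apply pow_lt; lra).
    split. apply Rmult_le_pos; [lra|left; apply Rinv_0_lt_compat; lra].
    apply Rmult_le_reg_r with (N ^ 2 * p ^ 2 + M ^ 2 * (1 - p) ^ 2). lra.
    unfold Rdiv; rewrite Rmult_assoc, Rinv_l by lra. lra.
Qed.

Lemma G_lt1 p : 0 <= p < 1 -> G M N p < 1.
Proof.
  intros Hp. unfold G.
  assert (0 <= N^2*p^2) by (apply Rmult_le_pos; apply pow2_ge_0).
  assert (0 < M^2*(1-p)^2) by (apply Rmult_lt_0_compat; apply pow_lt; lra).
  apply Rmult_lt_reg_r with (N ^ 2 * p ^ 2 + M ^ 2 * (1 - p) ^ 2). lra.
  unfold Rdiv; rewrite Rmult_assoc, Rinv_l by lra. lra.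
Qed.

Lemma G_pos p : 0 < p <= 1 -> 0 < G M N p.
Proof.
  intros Hp. unfold G.
  assert (0 < N^2*p^2) by (apply Rmult_lt_0_compat; apply pow_lt; lra).
  assert (0 <= M^2*(1-p)^2) by (apply Rmult_le_pos; apply pow2_ge_0).
  apply Rmult_lt_0_compat. lra. apply Rinv_0_lt_compat; lra.
Qed.

Lemma sig_G p : 0 <= p < 1 -> sig_ M N (G M N p) = (sig_ M N p)^2.
Proof.
  intros Hp. unfold sig_, G.
  assert (0 <= N^2*p^2) by (apply Rmult_le_pos; apply pow2_ge_0).
  assert (0 < M^2*(1-p)^2) by (apply Rmult_lt_0_compat; apply pow_lt; lra).
  assert (0 < M) by lra.
  field. repeat split; try lra.
Qed.

Lemma tau_G p : 0 < p <= 1 -> tau_ M N (G M N p) = (tau_ M N p)^2.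
Proof.
  intros Hp. unfold tau_, G.
  assert (0 < N^2*p^2) by (apply Rmult_lt_0_compat; apply pow_lt; lra).
  assert (0 <= M^2*(1-p)^2) by (apply Rmult_le_pos; apply pow2_ge_0).
  assert (0 < M) by lra.
  field. repeat split; try lra.
Qed.

Lemma sig_nonneg p : 0 <= p < 1 -> 0 <= sig_ M N p.
Proof.
  intros Hp. unfold sig_. apply Rmult_le_pos.
  apply Rmult_le_pos; [apply pow2_ge_0|lra].
  left; apply Rinv_0_lt_compat. apply Rmult_lt_0_compat; [apply pow_lt; lra|lra].
Qed.

Lemma tau_nonneg p : 0 < p <= 1 -> 0 <= tau_ M N p.
Proof.
  intros Hp. unfold tau_. apply Rmult_le_pos.
  apply Rmult_le_pos; [apply pow2_ge_0|lra].
  left; apply Rinv_0_lt_compat. apply Rmult_lt_0_compat; [apply pow_lt; lra|lra].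
Qed.

Lemma sig_mono p1 p2 : 0 <= p1 -> p1 <= p2 -> p2 < 1 -> sig_ M N p1 <= sig_ M N p2.
Proof.
  intros. unfold sig_.
  assert (0 < M^2) by (apply pow_lt; lra). assert (0 < N^2) by (apply pow_lt; lra).
  apply Rmult_le_reg_r with (M^2 * (1-p1) * (M^2 * (1 - p2))). apply Rmult_lt_0_compat; nra.
  replace (N ^ 2 * p1 / (M ^ 2 * (1 - p1)) * (M ^ 2 * (1 - p1) * (M ^ 2 * (1 - p2))))
    with (N^2 * p1 * (M^2 * (1-p2))) by (field; lra).
  replace (N ^ 2 * p2 / (M ^ 2 * (1 - p2)) * (M ^ 2 * (1 - p1) * (M ^ 2 * (1 - p2))))
    with (N^2 * p2 * (M^2 * (1-p1))) by (field; lra).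
  assert (0 <= N^2 * M^2 * (p2 - p1)) by (apply Rmult_le_pos; nra).
  nra.
Qed.

Lemma tau_anti p1 p2 : 0 < p1 -> p1 <= p2 -> p2 <= 1 -> tau_ M N p2 <= tau_ M N p1.
Proof.
  intros. unfold tau_.
  assert (0 < M^2) by (apply pow_lt; lra). assert (0 < N^2) by (apply pow_lt; lra).
  apply Rmult_le_reg_r with (N^2 * p1 * (N^2 * p2)). apply Rmult_lt_0_compat; nra.
  replace (M ^ 2 * (1 - p2) / (N ^ 2 * p2) * (N ^ 2 * p1 * (N ^ 2 * p2)))
    with (M ^ 2 * (1 - p2) * (N^2 * p1)) by (field; lra).
  replace (M ^ 2 * (1 - p1) / (N ^ 2 * p1) * (N ^ 2 * p1 * (N ^ 2 * p2)))
    with (M ^ 2 * (1 - p1) * (N^2 * p2)) by (field; lra).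
  assert (0 <= N^2 * M^2 * (p2 - p1)) by (apply Rmult_le_pos; nra).
  nra.
Qed.

Lemma p_le_sig p : 0 <= p < 1 -> p <= (M/N)^2 * sig_ M N p.
Proof.
  intros. unfold sig_.
  assert (0 < M^2) by (apply pow_lt; lra). assert (0 < N^2) by (apply pow_lt; lra).
  replace ((M / N) ^ 2 * (N ^ 2 * p / (M ^ 2 * (1 - p)))) with (p / (1-p)) by (field; lra).
  apply Rmult_le_reg_r with (1-p). lra.
  unfold Rdiv; rewrite Rmult_assoc, Rinv_l by lra. nra.
Qed.

Lemma q_le_tau p : 0 < p <= 1 -> 1 - p <= (N/M)^2 * tau_ M N p.
Proof.
  intros. unfold tau_.
  assert (0 < M^2) by (apply pow_lt; lra). assert (0 < N^2) by (apply pow_lt; lra).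
  replace ((N / M) ^ 2 * (M ^ 2 * (1 - p) / (N ^ 2 * p))) with ((1-p) / p) by (field; lra).
  apply Rmult_le_reg_r with p. lra.
  unfold Rdiv; rewrite Rmult_assoc, Rinv_l by lra. nra.
Qed.

Lemma inner_iter p q : 0 <= p < 1 -> sig_ M N p <= q -> q < 1 -> forall k,
  0 <= Nat.iter k (G M N) p < 1 /\ sig_ M N (Nat.iter k (G M N) p) <= q^(S k).
Proof.
  intros Hp Hs Hq k. induction k as [|k [IH1 IH2]].
  - simpl. split; lra.
  - simpl Nat.iter. split.
    + split. apply G_range; lra. apply G_lt1; lra.
    + rewrite sig_G by lra.
      assert (h0 := sig_nonneg _ IH1).
      assert (0 <= sig_ M N p) by (apply sig_nonneg; lra).
      assert (0 <= q) by lra.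
      assert (q^(S k) <= q). { simpl. assert (q^k <= 1) by (apply pow_le_1; split; lra). nra. }
      change (q ^ S (S k)) with (q * q^(S k)).
      nra.
Qed.

Lemma outer_iter p q : 0 < p <= 1 -> tau_ M N p <= q -> q < 1 -> forall k,
  0 < Nat.iter k (G M N) p <= 1 /\ tau_ M N (Nat.iter k (G M N) p) <= q^(S k).
Proof.
  intros Hp Hs Hq k. induction k as [|k [IH1 IH2]].
  - simpl. split; lra.
  - simpl Nat.iter. split.
    + split. apply G_pos; lra. apply G_range; lra.
    + rewrite tau_G by lra.
      assert (h0 := tau_nonneg _ IH1).
      assert (0 <= tau_ M N p) by (apply tau_nonneg; lra).
      assert (0 <= q) by lra.
      assert (q^(S k) <= q). { simpl. assert (q^k <= 1) by (apply pow_le_1; split; lra). nra. }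
      change (q ^ S (S k)) with (q * q^(S k)).
      nra.
Qed.

Lemma julia_iter p e : 0 <= p < 1 -> sig_ M N p < 1 -> 1 - e <= sig_ M N p -> forall k,
  0 <= Nat.iter k (G M N) p < 1 /\ 1 - 2^k * e <= sig_ M N (Nat.iter k (G M N) p).
Proof.
  intros Hp Hs He k. induction k as [|k [IH1 IH2]].
  - simpl. split; lra.
  - simpl Nat.iter. split.
    + split. apply G_range; lra. apply G_lt1; lra.
    + rewrite sig_G by lra.
      assert (h0 := sig_nonneg _ IH1).
      change (2 ^ S k) with (2 * 2^k).
      destruct (Rle_dec 0 (1 - 2^k * e)).
      * assert ((1 - 2^k*e)^2 <= sig_ M N (Nat.iter k (G M N) p) ^2) by (apply pow_incr; lra).
        nra.
      * pose proof (pow2_ge_0 (sig_ M N (Nat.iter k (G M N) p))). nra.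
Qed.

End S.


Lemma sumsq_nonneg x y : 0 <= x^2 + y^2.
Proof. apply Rplus_le_le_0_compat; apply pow2_ge_0. Qed.

Lemma pz_range z : 0 <= pz z <= 1.
Proof.
  destruct z as [a b]. unfold pz; simpl fst; simpl snd.
  assert (0 <= (a-1)^2+b^2) by apply sumsq_nonneg.
  assert (0 <= (a+1)^2+b^2) by apply sumsq_nonneg.
  assert (E : 2 * (1 + a^2 + b^2) = ((a-1)^2+b^2) + ((a+1)^2+b^2)) by ring.
  assert (0 < 2 * (1 + a^2 + b^2)) by nra.
  split.
  - apply Rmult_le_pos; [lra| left; apply Rinv_0_lt_compat; lra].
  - apply Rmult_le_reg_r with (2 * (1 + a ^ 2 + b ^ 2)); [lra|].
    unfold Rdiv; rewrite Rmult_assoc, Rinv_l by lra. lra.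
Qed.

Lemma pp_range x : 0 <= pp x <= 1.
Proof. destruct x; simpl. apply pz_range. lra. Qed.

Lemma pp_iter m n k x : (1<=n)%nat -> (1<=m)%nat ->
  pp (Nat.iter k (T_mn m n) x) = Nat.iter k (G (INR m) (INR n)) (pp x).
Proof.
  intros. induction k. reflexivity. simpl. rewrite pp_T by auto. now rewrite IHk.
Qed.

Lemma chordal_refl x : chordal x x = 0.
Proof.
  destruct x as [z|]; simpl; auto.
  unfold Cminus. rewrite Cplus_opp_r, Cmod_0. lra.
Qed.

Lemma le_of_sq (u v : R) : 0 <= v -> u^2 <= v^2 -> u <= v.
Proof. intros; apply Rle_trans with (Rabs u). apply Rle_abs. apply abs_le_of_sq; auto. Qed.

Lemma two_sqrt_lt x e : 0 <= x -> 0 < e -> x < e^2/4 -> 2 * sqrt x < e.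
Proof.
  intros Hx He H. assert (h := sq_sqrt_pos x Hx). assert (h2 := sqrt_pos x).
  destruct (Rlt_dec (2 * sqrt x) e); auto.
  exfalso. assert (e <= 2 * sqrt x) by lra.
  assert (e^2 <= (2*sqrt x)^2) by (apply pow_incr; lra). nra.
Qed.

Ltac chord_tac :=
  match goal with |- (2 * sqrt ?E / sqrt ?F)^2 <= _ =>
    assert (hE : 0 <= E) by apply sumsq_nonneg;
    assert (hF : 0 < F) by nra;
    assert (e1 := sq_sqrt_pos _ hE); assert (e2 := sq_sqrt_pos _ (Rlt_le _ _ hF));
    assert (e3 := sqrt_lt_R0 _ hF);
    set (sE := sqrt E) in *; set (sF := sqrt F) in *;
    replace ((2 * sE / sF)^2) with (4 * sE^2 / sF^2) by (field; lra);
    rewrite e1, e2; right; field; nra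
  end.

Ltac chord_tac2 :=
  match goal with |- (2 / sqrt ?F)^2 <= _ =>
    assert (hF : 0 < F) by lra;
    assert (e2 := sq_sqrt_pos _ (Rlt_le _ _ hF));
    assert (e3 := sqrt_lt_R0 _ hF);
    set (sF := sqrt F) in *;
    replace ((2 / sF)^2) with (4 / sF^2) by (field; lra);
    rewrite e2; right; field
  end.

Lemma chord_one y : chordal y (Some (RtoC 1)) <= 2 * sqrt (pp y).
Proof.
  destruct (pp_range y) as [h0 h1].
  assert (s0 := sqrt_pos (pp y)). assert (s2 := sq_sqrt_pos _ h0).
  apply le_of_sq. lra.
  replace ((2 * sqrt (pp y))^2) with (4 * pp y) by (set (sq := sqrt (pp y)) in *; rewrite <- s2; ring).
  destruct y as [[a b]|]; unfold pp, chordal; rewrite Cmod_R, Rabs_R1.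
  - unfold pz, Cmod, Cminus, Cplus, Copp, RtoC; simpl fst; simpl snd.
    rewrite (sq_sqrt_pos (a^2+b^2)) by apply sumsq_nonneg.
    chord_tac.
  - chord_tac2.
Qed.

Lemma chord_mone y : chordal y (Some (RtoC (-1))) <= 2 * sqrt (1 - pp y).
Proof.
  destruct (pp_range y) as [h0 h1].
  assert (s0 := sqrt_pos (1 - pp y)). assert (s2 := sq_sqrt_pos (1 - pp y) ltac:(lra)).
  apply le_of_sq. lra.
  replace ((2 * sqrt (1 - pp y))^2) with (4 * (1 - pp y)) by (set (sq := sqrt (1 - pp y)) in *; rewrite <- s2; ring).
  destruct y as [[a b]|]; unfold pp, chordal; rewrite Cmod_R;
    replace (Rabs (-1)) with 1 by (rewrite Rabs_left; lra).
  - unfold pz, Cmod, Cminus, Cplus, Copp, RtoC; simpl fst; simpl snd.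
    rewrite (sq_sqrt_pos (a^2+b^2)) by apply sumsq_nonneg.
    chord_tac.
  - chord_tac2.
Qed.

Lemma chordal_le_dist z w : chordal (Some z) (Some w) <= 2 * Cmod (Cminus z w).
Proof.
  unfold chordal. assert (h := Cmod_ge_0 (Cminus z w)).
  assert (1 <= (1 + Cmod z ^ 2) * (1 + Cmod w ^ 2)).
  { pose proof (pow2_ge_0 (Cmod z)); pose proof (pow2_ge_0 (Cmod w)). nra. }
  assert (1 <= sqrt ((1 + Cmod z ^ 2) * (1 + Cmod w ^ 2))).
  { apply Rle_trans with (sqrt 1); [rewrite sqrt_1; lra | apply sqrt_le_1_alt; lra]. }
  unfold Rdiv. apply Rle_trans with (2 * Cmod (Cminus z w) * 1); [|lra].
  apply Rmult_le_compat_l. lra.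
  apply Rle_trans with (/1); [apply Rinv_le_contravar; lra | rewrite Rinv_1; lra].
Qed.

Lemma build_seq (Q : nat -> nat -> Prop) :
  (forall k N, exists j, (N <= j)%nat /\ Q k j) ->
  exists phi : nat -> nat, (forall j, (phi j < phi (S j))%nat) /\ forall j, Q j (phi j).
Proof.
  intros H.
  set (f := fun k N => proj1_sig (constructive_indefinite_description _ (H k N))).
  assert (Hf : forall k N, (N <= f k N)%nat /\ Q k (f k N)).
  { intros k N. unfold f. destruct (constructive_indefinite_description _ (H k N)). auto. }
  set (phi := fix phi (k : nat) : nat := match k with O => f O O | S k' => f (S k') (S (phi k')) end).
  exists phi. split.
  - intros j. simpl. destruct (Hf (S j) (S (phi j))). lia.
  - intros [|j]; simpl; apply Hf.
Qed.

Lemma pigeon (s : nat -> nat) : forall Mb N0, (forall j, (N0 <= j)%nat -> (s j < Mb)%nat) ->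
  exists v, forall N, exists j, (N <= j)%nat /\ s j = v.
Proof.
  intros Mb. induction Mb as [|Mb IH]; intros N0 H.
  - specialize (H N0 (le_n _)). lia.
  - destruct (Classical_Prop.classic (forall N, exists j, (N <= j)%nat /\ s j = Mb)) as [h|h].
    + exists Mb; auto.
    + apply Classical_Pred_Type.not_all_ex_not in h. destruct h as [N1 h].
      apply (IH (max N0 N1)). intros j Hj.
      assert (s j <> Mb). { intro e. apply h. exists j. split; [lia|auto]. }
      specialize (H j ltac:(lia)). lia.
Qed.

Lemma subseq (s : nat -> nat) : exists phi : nat -> nat,
  (forall j, (phi j < phi (S j))%nat) /\
  ((exists v, forall j, s (phi j) = v) \/ (forall j, (j <= s (phi j))%nat)).
Proof.
  destruct (Classical_Prop.classic (forall Mb N, exists j, (N <= j)%nat /\ (Mb <= s j)%nat)) as [h|h].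
  - destruct (build_seq (fun k j => (k <= s j)%nat) h) as [phi [H1 H2]].
    exists phi. split; auto.
  - apply Classical_Pred_Type.not_all_ex_not in h. destruct h as [Mb h].
    apply Classical_Pred_Type.not_all_ex_not in h. destruct h as [N0 h].
    assert (H : forall j, (N0 <= j)%nat -> (s j < Mb)%nat).
    { intros j Hj. destruct (Nat.lt_ge_cases (s j) Mb); auto. exfalso. apply h. exists j; auto. }
    destruct (pigeon s Mb N0 H) as [v Hv].
    destruct (build_seq (fun k j => s j = v) (fun k N => Hv N)) as [phi [H1 H2]].
    exists phi. split; auto. left. exists v. auto.
Qed.

Lemma phi_ge (phi : nat -> nat) : (forall j, (phi j < phi (S j))%nat) -> forall j, (j <= phi j)%nat.
Proof. intros H j. induction j. lia. specialize (H j). lia. Qed.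


Definition pstar (M N : R) := M^2/(M^2+N^2).
Definition Dq (M N a b : R) := M^2*((a+1)^2+b^2) - N^2*((a-1)^2+b^2).

Section S.
Variables M N : R.
Hypothesis HN : 0 < N.
Hypothesis HNM : N <= M.

Lemma pz_minus a b : pz (a,b) - pstar M N =
  - Dq M N a b / (2*(1+a^2+b^2) * (M^2+N^2)).
Proof.
  unfold pz, pstar, Dq; simpl fst; simpl snd.
  assert (0 < M^2) by (apply pow_lt; lra). assert (0 < N^2) by (apply pow_lt; lra).
  assert (0 < 1 + a^2+b^2) by nra.
  field. lra.
Qed.

Lemma pz_lt_iff a b : pz (a,b) < pstar M N <-> 0 < Dq M N a b.
Proof.
  assert (h := pz_minus a b).
  assert (0 < M^2) by (apply pow_lt; lra). assert (0 < N^2) by (apply pow_lt; lra).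
  assert (0 < 2*(1 + a^2+b^2) * (M^2+N^2)) by nra.
  set (K := 2*(1 + a^2+b^2) * (M^2+N^2)) in *.
  assert (e : Dq M N a b = - (pz (a,b) - pstar M N) * K) by (rewrite h; field; lra).
  rewrite e. split; intro; nra.
Qed.

Lemma pz_eq_iff a b : pz (a,b) = pstar M N <-> Dq M N a b = 0.
Proof.
  assert (h := pz_minus a b).
  assert (0 < M^2) by (apply pow_lt; lra). assert (0 < N^2) by (apply pow_lt; lra).
  assert (0 < 2*(1 + a^2+b^2) * (M^2+N^2)) by nra.
  set (K := 2*(1 + a^2+b^2) * (M^2+N^2)) in *.
  assert (e : Dq M N a b = - (pz (a,b) - pstar M N) * K) by (rewrite h; field; lra).
  rewrite e. split; intro. rewrite H2; ring.
  assert (pz (a,b) - pstar M N = 0). { apply Rmult_eq_reg_r with K; lra. } lra.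
Qed.

Lemma pstar_range : 1/2 <= pstar M N < 1.
Proof.
  unfold pstar. assert (0 < N^2) by (apply pow_lt; lra).
  assert (N^2 <= M^2) by (apply pow_incr; lra).
  split.
  - assert (M^2/(M^2+N^2) - 1/2 = (M^2-N^2)/(2*(M^2+N^2))) by (field; lra).
    assert (0 <= (M^2-N^2)/(2*(M^2+N^2))) by (apply Rmult_le_pos; [lra| left; apply Rinv_0_lt_compat; lra]). lra.
  - assert (1 - M^2/(M^2+N^2) = N^2/(M^2+N^2)) by (field; lra).
    assert (0 < N^2/(M^2+N^2)) by (apply Rmult_lt_0_compat; [lra| apply Rinv_0_lt_compat; lra]). lra.
Qed.

Lemma sig_lt1 p : 0 <= p < pstar M N -> sig_ M N p < 1.
Proof.
  intros Hp. pose proof pstar_range. unfold pstar in *. unfold sig_.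
  assert (0 < M^2) by (apply pow_lt; lra). assert (0 < N^2) by (apply pow_lt; lra).
  assert (p * (M^2+N^2) < M^2).
  { apply Rmult_lt_reg_r with (/ (M^2+N^2)). apply Rinv_0_lt_compat; lra.
    rewrite Rmult_assoc, Rinv_r by lra. lra. }
  apply Rmult_lt_reg_r with (M^2*(1-p)). nra.
  unfold Rdiv; rewrite Rmult_assoc, Rinv_l by nra. nra.
Qed.

Lemma tau_lt1 p : pstar M N < p <= 1 -> tau_ M N p < 1.
Proof.
  intros Hp. pose proof pstar_range. unfold pstar in *. unfold tau_.
  assert (0 < M^2) by (apply pow_lt; lra). assert (0 < N^2) by (apply pow_lt; lra).
  assert (M^2 < p * (M^2+N^2)).
  { apply Rmult_lt_reg_r with (/ (M^2+N^2)). apply Rinv_0_lt_compat; lra.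
    rewrite Rmult_assoc, Rinv_r by lra. lra. }
  apply Rmult_lt_reg_r with (N^2*p). nra.
  unfold Rdiv; rewrite Rmult_assoc, Rinv_l by nra. nra.
Qed.

Definition Kc := (M^2+N^2)^2/(M^2*N^2).

Lemma Kc_pos : 0 < Kc.
Proof.
  unfold Kc. assert (0 < M^2) by (apply pow_lt; lra). assert (0 < N^2) by (apply pow_lt; lra).
  apply Rmult_lt_0_compat. apply pow_lt; lra. apply Rinv_0_lt_compat; nra.
Qed.

Lemma sig_lower p : 0 <= p <= pstar M N -> 1 - sig_ M N p <= Kc * (pstar M N - p).
Proof.
  intros Hp. pose proof pstar_range. unfold Kc, sig_.
  assert (0 < M^2) by (apply pow_lt; lra). assert (0 < N^2) by (apply pow_lt; lra).
  assert (e : 1 - N ^ 2 * p / (M ^ 2 * (1 - p)) = (M^2+N^2) * (pstar M N - p) / (M^2 * (1-p))).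
  { unfold pstar. field. lra. }
  rewrite e.
  assert (h1 : 1 - p >= N^2/(M^2+N^2)).
  { assert (1 - pstar M N = N^2/(M^2+N^2)) by (unfold pstar; field; lra). lra. }
  assert (0 < N^2/(M^2+N^2)) by (apply Rmult_lt_0_compat; [lra| apply Rinv_0_lt_compat; lra]).
  set (d := pstar M N - p) in *. assert (0 <= d) by (unfold d; lra).
  set (q := 1 - p) in *.
  replace ((M ^ 2 + N ^ 2) ^ 2 / (M ^ 2 * N ^ 2) * d) with
    ((M ^ 2 + N ^ 2) * d / (M^2 * (N^2/(M^2+N^2)))) by (field; lra).
  unfold Rdiv. apply Rmult_le_compat_l. nra.
  apply Rinv_le_contravar. nra. apply Rmult_le_compat_l; lra.
Qed.

Lemma third p : 0 <= p < 1 -> 1/2 <= sig_ M N p -> 1/3 <= p.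
Proof.
  intros Hp H.
  assert (0 < M^2) by (apply pow_lt; lra). assert (0 < N^2) by (apply pow_lt; lra).
  assert (N^2 <= M^2) by (apply pow_incr; lra).
  assert (0 < M^2*(1-p)) by nra.
  assert (e : N^2*p = sig_ M N p * (M^2*(1-p))) by (unfold sig_; field; lra).
  assert (h : 1/2 * (M^2*(1-p)) <= N^2 * p) by nra.
  nra.
Qed.

Lemma exists_inner_near x d : pp x = pstar M N -> 0 < d ->
  exists y, chordal x y < d /\ pp y < pstar M N.
Proof.
  intros Hx Hd. pose proof pstar_range.
  assert (0 < M^2) by (apply pow_lt; lra). assert (0 < N^2) by (apply pow_lt; lra).
  destruct x as [[a b]|].
  - simpl in Hx. apply pz_eq_iff in Hx.
    set (gx := 2*M^2*(a+1) - 2*N^2*(a-1)). set (gy := 2*(M^2-N^2)*b).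
    assert (hg : gx^2 + gy^2 = 16 * M^2 * N^2 + 4*(M^2-N^2) * Dq M N a b)
      by (unfold gx, gy, Dq; ring).
    rewrite Hx in hg.
    set (t := d / (16 * M * N)).
    assert (ht : 0 < t) by (unfold t; apply Rmult_lt_0_compat; [lra| apply Rinv_0_lt_compat; nra]).
    assert (e : 4*t*M*N = d/4) by (unfold t; field; split; lra).
    clearbody t.
    exists (Some (a + t*gx, b + t*gy)). split.
    + eapply Rle_lt_trans. apply chordal_le_dist.
      unfold Cmod, Cminus, Cplus, Copp; simpl fst; simpl snd.
      replace ((a + - (a + t * gx)) ^ 2 + (b + - (b + t * gy)) ^ 2) with ((4*t*M*N)^2)
        by (replace ((a + - (a + t * gx)) ^ 2 + (b + - (b + t * gy)) ^ 2) with (t^2*(gx^2+gy^2)) by ring;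
            rewrite hg; ring).
      assert (0 < M) by lra.
      rewrite sqrt_pow2. rewrite e; lra. rewrite e; lra.
    + simpl pp. apply pz_lt_iff.
      replace (Dq M N (a + t * gx) (b + t * gy)) with
        (Dq M N a b + t * (gx^2+gy^2) + (M^2-N^2) * t^2 * (gx^2+gy^2))
        by (unfold Dq, gx, gy; ring).
      clearbody gx gy.
      rewrite Hx, hg.
      assert (N^2 <= M^2) by (apply pow_incr; lra).
      assert (0 <= (M^2-N^2) * t^2 * (16 * M^2 * N^2 + 4 * (M^2 - N^2) * 0)).
      { apply Rmult_le_pos. apply Rmult_le_pos. lra. apply pow2_ge_0. nra. }
      nra.
  - simpl in Hx. set (R0 := 2/d + 1).
    assert (hR : 2/d < R0) by (unfold R0; lra).
    assert (0 < 2/d) by (apply Rmult_lt_0_compat; [lra| apply Rinv_0_lt_compat; lra]).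
    exists (Some (R0, 0)). split.
    + unfold chordal, Cmod; simpl fst; simpl snd.
      rewrite (sq_sqrt_pos (R0^2+0^2)) by apply sumsq_nonneg.
      assert (hs : R0 <= sqrt (1 + (R0^2+0^2))).
      { rewrite <- (sqrt_pow2 R0) at 1 by lra. apply sqrt_le_1_alt. nra. }
      assert (0 < sqrt (1 + (R0^2+0^2))) by lra.
      apply Rmult_lt_reg_r with (sqrt (1 + (R0 ^ 2 + 0 ^ 2))). lra.
      unfold Rdiv; rewrite Rmult_assoc, Rinv_l by lra.
      assert (2 < d * R0).
      { apply Rmult_lt_compat_l with (r := d) in hR; [|lra]. unfold Rdiv in hR.
        rewrite <- Rmult_assoc, (Rmult_comm d 2), Rmult_assoc, Rinv_r in hR by lra. lra. }
      nra.
    + simpl pp. unfold pz; simpl fst; simpl snd. rewrite <- Hx.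
      apply Rmult_lt_reg_r with (2 * (1 + R0 ^ 2 + 0 ^ 2)). nra.
      unfold Rdiv; rewrite Rmult_assoc, Rinv_l by nra. nra.
Qed.

End S.


Lemma lip_lower y y' : pp y' - pp y <= chordal y y'.
Proof.
  pose proof (pp_lip y y'). rewrite Rabs_minus_sym in H.
  pose proof (Rle_abs (pp y' - pp y)). lra.
Qed.
Lemma lip_upper y y' : pp y - pp y' <= chordal y y'.
Proof.
  pose proof (pp_lip y y'). pose proof (Rle_abs (pp y - pp y')). lra.
Qed.

Lemma powS_le q k : 0 <= q <= 1 -> q^(S k) <= q^k.
Proof. intros. simpl. assert (0 <= q^k) by (apply pow_le; lra). nra. Qed.

Section T.
Variables m n : nat.
Hypothesis Hn : (1 <= n)%nat.
Hypothesis Hnm : (n <= m)%nat.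

Let M := INR m.
Let N := INR n.
Lemma HN : 0 < N. Proof. unfold N; apply lt_0_INR; lia. Qed.
Lemma HNM : N <= M. Proof. unfold N, M; apply le_INR; lia. Qed.
Lemma Hm : (1 <= m)%nat. Proof. lia. Qed.

Lemma fatou_inner x : pp x < pstar M N -> fatou (T_mn m n) x.
Proof.
  intros Hx. pose proof HN as HN. pose proof HNM as HNM.
  pose proof (pstar_range M N HN HNM) as Hps.
  set (be := (pp x + pstar M N)/2).
  pose proof (pp_range x).
  assert (Hbe : pp x < be < pstar M N) by (unfold be; lra). clearbody be.
  exists (fun y => pp y < be). split; [|split].
  - intros y Hy. exists (be - pp y). split. lra. intros y' Hc.
    pose proof (lip_lower y y'). lra.
  - lra.
  - intros s. destruct (subseq s) as [phi [Hphi [[v Hv]|Hge]]].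
    + exists phi, (Nat.iter v (T_mn m n)). split; auto. intros y _. exists 1. split; [lra|].
      intros eps He. exists 0%nat. intros j _ y' _ _. rewrite Hv, chordal_refl. lra.
    + exists phi, (fun _ => Some (RtoC 1)). split; auto. intros y _. exists 1. split;[lra|].
      intros eps He.
      set (q := sig_ M N be).
      assert (Hq0 : 0 <= q) by (apply sig_nonneg; lra).
      assert (Hq1 : q < 1) by (apply sig_lt1; auto; lra).
      set (K := (M/N)^2).
      assert (HK : 0 < K) by (unfold K; apply pow_lt; unfold Rdiv; apply Rmult_lt_0_compat; [lra| apply Rinv_0_lt_compat; lra]).
      assert (hy0 : 0 < eps^2/4/K).
      { unfold Rdiv. apply Rmult_lt_0_compat. apply Rmult_lt_0_compat. apply pow_lt; lra. lra.
        apply Rinv_0_lt_compat; lra. }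
      destruct (pow_lt_1_zero q ltac:(rewrite Rabs_pos_eq; lra) _ hy0) as [N0 HN0].
      exists N0. intros j Hj y' Hy' _.
      set (k := s (phi j)). assert (Hk : (N0 <= k)%nat) by (unfold k; specialize (Hge j); lia).
      eapply Rle_lt_trans. apply chord_one.
      apply two_sqrt_lt; [apply pp_range| lra |].
      rewrite pp_iter by (auto; apply Hm). change (INR m) with M; change (INR n) with N.
      pose proof (pp_range y').
      destruct (inner_iter M N HN HNM (pp y') q ltac:(lra)
                  ltac:(apply sig_mono; auto; lra) Hq1 k) as [Hr Hs].
      pose proof (p_le_sig M N HN HNM _ Hr).
      pose proof (powS_le q k ltac:(lra)).
      specialize (HN0 k Hk). rewrite Rabs_pos_eq in HN0 by (apply pow_le; lra).
      fold K in H1.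
      assert (K * q^k < eps^2/4).
      { apply Rmult_lt_compat_l with (r := K) in HN0; auto.
        replace (K * (eps ^ 2 / 4 / K)) with (eps^2/4) in HN0 by (field; lra). lra. }
      assert (K * sig_ M N (Nat.iter k (G M N) (pp y')) <= K * q^k).
      { apply Rmult_le_compat_l; lra. }
      lra.
Qed.

Lemma fatou_outer x : pstar M N < pp x -> fatou (T_mn m n) x.
Proof.
  intros Hx. pose proof HN as HN. pose proof HNM as HNM.
  pose proof (pstar_range M N HN HNM) as Hps.
  set (be := (pp x + pstar M N)/2).
  pose proof (pp_range x).
  assert (Hbe : pstar M N < be < pp x) by (unfold be; lra). clearbody be.
  exists (fun y => be < pp y). split; [|split].
  - intros y Hy. exists (pp y - be). split. lra. intros y' Hc.
    pose proof (lip_upper y y'). lra.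
  - lra.
  - intros s. destruct (subseq s) as [phi [Hphi [[v Hv]|Hge]]].
    + exists phi, (Nat.iter v (T_mn m n)). split; auto. intros y _. exists 1. split; [lra|].
      intros eps He. exists 0%nat. intros j _ y' _ _. rewrite Hv, chordal_refl. lra.
    + exists phi, (fun _ => Some (RtoC (-1))). split; auto. intros y _. exists 1. split;[lra|].
      intros eps He.
      set (q := tau_ M N be).
      assert (Hq0 : 0 <= q) by (apply tau_nonneg; lra).
      assert (Hq1 : q < 1) by (apply tau_lt1; auto; lra).
      set (K := (N/M)^2).
      assert (HK : 0 < K) by (unfold K; apply pow_lt; unfold Rdiv; apply Rmult_lt_0_compat; [lra| apply Rinv_0_lt_compat; lra]).
      assert (hy0 : 0 < eps^2/4/K).
      { unfold Rdiv. apply Rmult_lt_0_compat. apply Rmult_lt_0_compat. apply pow_lt; lra. lra.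
        apply Rinv_0_lt_compat; lra. }
      destruct (pow_lt_1_zero q ltac:(rewrite Rabs_pos_eq; lra) _ hy0) as [N0 HN0].
      exists N0. intros j Hj y' Hy' _.
      set (k := s (phi j)). assert (Hk : (N0 <= k)%nat) by (unfold k; specialize (Hge j); lia).
      eapply Rle_lt_trans. apply chord_mone.
      pose proof (pp_range (Nat.iter k (T_mn m n) y')).
      apply two_sqrt_lt; [lra| lra |].
      rewrite pp_iter by (auto; apply Hm). change (INR m) with M; change (INR n) with N.
      pose proof (pp_range y').
      destruct (outer_iter M N HN HNM (pp y') q ltac:(lra)
                  ltac:(apply tau_anti; auto; lra) Hq1 k) as [Hr Hs].
      pose proof (q_le_tau M N HN HNM _ Hr).
      pose proof (powS_le q k ltac:(lra)).
      specialize (HN0 k Hk). rewrite Rabs_pos_eq in HN0 by (apply pow_le; lra).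
      fold K in H2.
      assert (K * q^k < eps^2/4).
      { apply Rmult_lt_compat_l with (r := K) in HN0; auto.
        replace (K * (eps ^ 2 / 4 / K)) with (eps^2/4) in HN0 by (field; lra). lra. }
      assert (K * tau_ M N (Nat.iter k (G M N) (pp y')) <= K * q^k).
      { apply Rmult_le_compat_l; lra. }
      lra.
Qed.

Lemma julia_circle x : pp x = pstar M N -> julia (T_mn m n) x.
Proof.
  intros Hx [U [HU [Ux Hnorm]]].
  pose proof HN as HN. pose proof HNM as HNM.
  pose proof (pstar_range M N HN HNM) as Hps.
  destruct (Hnorm (fun k => k)) as [phi [h [Hphi Hcvg]]].
  destruct (Hcvg x Ux) as [r1 [Hr1 Hunif]].
  destruct (HU x Ux) as [r2 [Hr2 HUb]].
  destruct (Hunif (1/16) ltac:(lra)) as [N0 HN0].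
  set (k := phi N0).
  assert (h2k : 0 < 2^k) by (apply pow_lt; lra).
  set (ep := / (2 * 2^k)).
  assert (Hep : 0 < ep) by (unfold ep; apply Rinv_0_lt_compat; lra).
  assert (HK := Kc_pos M N HN HNM).
  set (eta := ep / Kc M N).
  assert (Heta : 0 < eta) by (unfold eta; apply Rmult_lt_0_compat; [lra|apply Rinv_0_lt_compat; lra]).
  set (d := Rmin (Rmin r1 r2) eta).
  assert (Hd : 0 < d) by (unfold d; repeat apply Rmin_pos; lra).
  destruct (exists_inner_near M N HN HNM x d Hx Hd) as [y [Hxy Hy]].
  assert (d <= r1 /\ d <= r2 /\ d <= eta).
  { unfold d. pose proof (Rmin_l (Rmin r1 r2) eta). pose proof (Rmin_r (Rmin r1 r2) eta).
    pose proof (Rmin_l r1 r2). pose proof (Rmin_r r1 r2). lra. }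
  assert (Uy : U y) by (apply HUb; lra).
  pose proof (lip_upper x y).
  pose proof (pp_range y).
  assert (Hs1 : 1 - sig_ M N (pp y) <= ep).
  { pose proof (sig_lower M N HN HNM (pp y) ltac:(lra)).
    assert (Kc M N * (pstar M N - pp y) <= Kc M N * eta) by (apply Rmult_le_compat_l; lra).
    assert (Kc M N * eta = ep) by (unfold eta; field; lra). lra. }
  assert (Hs2 : sig_ M N (pp y) < 1) by (apply sig_lt1; auto; lra).
  destruct (julia_iter M N HN HNM (pp y) ep ltac:(lra) Hs2 ltac:(lra) k) as [Hr1' Hs3].
  replace (2^k * ep) with (1/2) in Hs3 by (unfold ep; field; lra).
  assert (Hthird := third M N HN HNM _ Hr1' ltac:(lra)).
  set (q1 := sig_ M N (pp y)) in *.
  assert (Hq0 : 0 <= q1) by (apply sig_nonneg; lra).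
  set (C := (M/N)^2).
  assert (HC : 0 < C) by (unfold C; apply pow_lt; unfold Rdiv; apply Rmult_lt_0_compat; [lra| apply Rinv_0_lt_compat; lra]).
  assert (hy0 : 0 < 1/12/C) by (unfold Rdiv; apply Rmult_lt_0_compat; [lra| apply Rinv_0_lt_compat; lra]).
  destruct (pow_lt_1_zero q1 ltac:(rewrite Rabs_pos_eq; lra) _ hy0) as [K0 HK0].
  set (j' := Nat.max N0 K0).
  set (k' := phi j').
  assert (Hk' : (K0 <= k')%nat) by (unfold k', j'; pose proof (phi_ge phi Hphi (Nat.max N0 K0)); lia).
  destruct (inner_iter M N HN HNM (pp y) q1 ltac:(lra) (Rle_refl _) Hs2 k') as [Hr2' Hs4].
  pose proof (p_le_sig M N HN HNM _ Hr2') as Hpl.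
  pose proof (powS_le q1 k' ltac:(lra)) as Hpw.
  specialize (HK0 k' Hk'). rewrite Rabs_pos_eq in HK0 by (apply pow_le; lra).
  assert (C * q1^k' < 1/12).
  { apply Rmult_lt_compat_l with (r := C) in HK0; auto.
    replace (C * (1 / 12 / C)) with (1/12) in HK0 by (field; lra). lra. }
  assert (C * sig_ M N (Nat.iter k' (G M N) (pp y)) <= C * q1^k').
  { apply Rmult_le_compat_l; lra. }
  fold C in Hpl.
  assert (Hsmall : Nat.iter k' (G M N) (pp y) < 1/12) by lra.
  pose proof (HN0 N0 (le_n _) y Uy ltac:(lra)) as Ha.
  pose proof (HN0 j' ltac:(unfold j'; lia) y Uy ltac:(lra)) as Hb.
  simpl in Ha, Hb. fold k in Ha. fold k' in Hb.
  pose proof (lip_upper (Nat.iter k (T_mn m n) y) (h y)) as L1.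
  pose proof (lip_lower (Nat.iter k' (T_mn m n) y) (h y)) as L2.
  rewrite pp_iter in L1, L2 by (auto; apply Hm).
  change (INR m) with M in L1, L2; change (INR n) with N in L1, L2.
  lra.
Qed.

End T.


Lemma julia_iff m n x : (1 <= n)%nat -> (n <= m)%nat ->
  (julia (T_mn m n) x <-> pp x = pstar (INR m) (INR n)).
Proof.
  intros Hn Hnm. split.
  - intros J. destruct (Rtotal_order (pp x) (pstar (INR m) (INR n))) as [h|[h|h]]; auto.
    + exfalso. apply J. apply fatou_inner; auto.
    + exfalso. apply J. apply fatou_outer; auto.
  - apply julia_circle; auto.
Qed.

Theorem theorem1 (m n : nat) (hn : (1 <= n)%nat) (hnm : (n <= m)%nat) :
  (m = n ->
     (forall z : C, julia (T_mn m n) (Some z) <-> Re z = 0) /\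
     julia (T_mn m n) None) /\
  ((n < m)%nat ->
     (forall z : C, julia (T_mn m n) (Some z) <->
        Cmod (Cplus z (RtoC ((INR m ^ 2 + INR n ^ 2) / (INR m ^ 2 - INR n ^ 2))))
          = 2 * INR m * INR n / (INR m ^ 2 - INR n ^ 2)) /\
     ~ julia (T_mn m n) None).
Proof.
  assert (HN : 0 < INR n) by (apply lt_0_INR; lia).
  assert (HNM : INR n <= INR m) by (apply le_INR; lia).
  split.
  - intros ->.
    assert (Hps : pstar (INR n) (INR n) = 1/2) by (unfold pstar; field; nra).
    split.
    + intros [a b]. rewrite julia_iff by auto. simpl pp.
      rewrite pz_eq_iff by lra. unfold Dq, Re; simpl fst.
      split; intro h.
      * assert (e : (INR n)^2 * (4 * a) = 0) by (rewrite <- h; ring).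
        apply Rmult_integral in e. destruct e as [e|e]. 
        -- exfalso. assert (0 < INR n ^2) by (apply pow_lt; lra). lra.
        -- lra.
      * subst a. ring.
    + rewrite julia_iff by auto. simpl pp. auto.
  - intros Hlt.
    assert (HMN : INR n < INR m) by (apply lt_INR; lia).
    set (M := INR m) in *. set (N := INR n) in *.
    assert (hM2 : N^2 < M^2) by nra.
    split.
    + intros [a b]. rewrite julia_iff by auto. simpl pp. fold M N.
      rewrite pz_eq_iff by lra.
      unfold Cmod, Cplus, RtoC; cbn [fst snd].
      set (R0 := 2 * M * N / (M ^ 2 - N ^ 2)).
      assert (HR : 0 < R0) by (unfold R0; apply Rmult_lt_0_compat; [nra| apply Rinv_0_lt_compat; lra]).
      set (X := (a + (M ^ 2 + N ^ 2) / (M ^ 2 - N ^ 2)) ^ 2 + (b + 0) ^ 2).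
      assert (HX : 0 <= X) by (unfold X; apply sumsq_nonneg).
      assert (eX : X - R0^2 = Dq M N a b / (M^2 - N^2)) by (unfold X, R0, Dq; field; lra).
      split; intro h.
      * assert (h' : X = R0^2).
        { apply Rmult_eq_reg_r with (/ (M^2 - N^2)). 2: apply Rinv_neq_0_compat; lra.
          apply Rminus_diag_uniq. rewrite <- Rmult_minus_distr_r.
          unfold Rdiv in eX. rewrite eX, h. ring. }
        rewrite h'. apply sqrt_pow2. lra.
      * assert (h' : X = R0^2).
        { rewrite <- h. rewrite sq_sqrt_pos; auto. }
        assert (e : Dq M N a b / (M^2 - N^2) = 0) by lra.
        unfold Rdiv in e. apply Rmult_integral in e. destruct e as [e|e]; auto.
        exfalso. revert e. apply Rinv_neq_0_compat. lra.
    + rewrite julia_iff by auto. simpl pp. fold M N. unfold pstar.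
      intro h.
      assert (e : M^2 / (M^2 + N^2) - 1/2 = (M^2 - N^2)/(2*(M^2+N^2))) by (field; nra).
      assert (0 < (M^2 - N^2)/(2*(M^2+N^2))) by (apply Rmult_lt_0_compat; [lra| apply Rinv_0_lt_compat; nra]).
      lra.
Qed.
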